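(* Let $n\ge 1$, let $S=\{s_1,\dots,s_{n-1}\}$ with $s_i=(i,i+1)$ be the simple reflections of $S_n$, let $I_n=\{\pi\in S_n : \pi^2=\mathrm{id}\}$, and let $V_n$ be the $\mathbb{Q}$-vector space with basis $\{C_w : w\in I_n\}$. Define $\rho:S\to GL(V_n)$ by $\rho(s)C_w=\mathrm{sign}(s;w)\,C_{sws}$ for $s\in S$, $w\in I_n$, where $\mathrm{sign}(s;w)=-1$ if $sws=w$ and $s\in\mathrm{Des}(w)$, and $\mathrm{sign}(s;w)=1$ otherwise. Then $\rho$ extends (uniquely) to a group homomorphism $S_n\to GL(V_n)$, i.e. it determines a representation of $S_n$.
   Context: $\ell(\pi)$ is the Coxeter length of $\pi\in S_n$ with respect to $S$ (the number of inversions), and the descent set is $\mathrm{Des}(\pi)=\{s\in S:\ell(\pi s)<\ell(\pi)\}$; equivalently $s_i\in\mathrm{Des}(\pi)$ iff $\pi(i)>\pi(i+1)$. *)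

(* Defs.v *)
From HB Require Import structures.
From mathcomp Require Import all_boot all_order all_algebra all_fingroup.
Set Implicit Arguments. Unset Strict Implicit. Unset Printing Implicit Defensive.
Import GRing.Theory.
Local Open Scope ring_scope.

(* Permutations of {0,...,n-1} ('I_n); s_i = (i, i+1) with 0-based indices. *)

Definition simple_refl (n : nat) (s : 'S_n) : bool :=
  [exists i : 'I_n, exists j : 'I_n, (val j == (val i).+1)%N && (s == tperm i j)].

Definition in_des (n : nat) (w s : 'S_n) : bool :=
  [exists i : 'I_n, exists j : 'I_n,
     [&& (val j == (val i).+1)%N, s == tperm i j & (w j < w i)%N]].

Notation invol n := {w : 'S_n | w * w == 1}%g.

(* V_n: the Q-vector space with basis indexed by I_n (coordinate functions). *)
Notation Vn n := {ffun invol n -> rat^o}.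

(* Basis vector C_x (x an involution; C_x = 0 if x is not an involution,
   which never happens below since sws is always an involution). *)
Definition Cb (n : nat) (x : 'S_n) : Vn n :=
  [ffun u : invol n => ((val u == x)%:R : rat^o)].

Definition sgn (n : nat) (s w : 'S_n) : rat :=
  if (s * w * s == w)%g && in_des w s then -1 else 1.

Definition rho (n : nat) (s : 'S_n) (v : Vn n) : Vn n :=
  \sum_(w : invol n) (v w * sgn s (val w)) *: Cb (s * val w * s)%g.

Definition is_rep (n : nat) (phi : 'S_n -> Vn n -> Vn n) : Prop :=
  [/\ (forall g (a : rat) (u v : Vn n), phi g (a *: u + v) = a *: phi g u + phi g v),
      (forall g, bijective (phi g)) &
      (forall g h v, phi (g * h)%g v = phi g (phi h v))].

(* Main.v *)
Require Import Defs.
From HB Require Import structures.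
From mathcomp Require Import all_boot all_order all_algebra all_fingroup.
Set Implicit Arguments. Unset Strict Implicit. Unset Printing Implicit Defensive.
Import GRing.Theory.
From Stdlib Require Import Lia.
Local Open Scope ring_scope.
Lemma natcase (a b k : nat) : (a < b)%N ->
  ((if a == k then k.+1 else if a == k.+1 then k else a) <
   (if b == k then k.+1 else if b == k.+1 then k else b))%N =
  ~~ ((a == k) && (b == k.+1)).
Proof.
move=> /ltP hab.
case: (eqVneq a k) => [ha|/eqP ha]; case: (eqVneq b k) => [hb|/eqP hb];
case: (eqVneq b k.+1) => [hb2|/eqP hb2]; case: (eqVneq a k.+1) => [ha2|/eqP ha2];
rewrite /=;
try (by apply/ltP; lia); try (by apply/negbTE/negP => /ltP; lia);
try (by exfalso; lia).
Qed.


Lemma ffun_test n (a : rat) (u v : Vn n) x : (a *: u + v) x = a * u x + v x.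
Proof. by rewrite !ffunE. Qed.

Definition ee n (p : 'S_n) (i j : 'I_n) : rat :=
  if ((i < j)%N == (p i < p j)%N) then 1 else -1.
Definition sg n (g w : 'S_n) : rat :=
  \prod_(i : 'I_n | (i < w i)%N) ee (g^-1)%g i (w i).

Lemma invol_conj n (g : 'S_n) (u : invol n) :
  ((g^-1 * val u * g) * (g^-1 * val u * g) == 1)%g.
Proof.
case: u => u /= /eqP hu; apply/eqP.
by rewrite !mulgA mulgK -(mulgA _ u u) hu mulg1 mulVg.
Qed.

Definition cinv n (g : 'S_n) (u : invol n) : invol n := exist (fun w : 'S_n => (w * w == 1)%g) _ (invol_conj g u).

Definition phi n (g : 'S_n) (v : Vn n) : Vn n :=
  [ffun u => v (cinv g u) * sg g (val (cinv g u))].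

Lemma invol_app n (x : 'S_n) i : (x * x = 1)%g -> x (x i) = i.
Proof. by move=> h; rewrite -permM h perm1. Qed.

Lemma ee_mul n (p q : 'S_n) i j : ee (p * q)%g i j = ee p i j * ee q (p i) (p j).
Proof.
rewrite /ee !permM.
by case: (i < j)%N; case: (p i < p j)%N; case: (q (p i) < q (p j))%N;
  rewrite ?mulr1 ?mul1r ?mulrNN ?mulr1.
Qed.

Lemma ee_sym n (p : 'S_n) i j : i != j -> ee p i j = ee p j i.
Proof.
move=> hij; have hp : p i != p j by rewrite (inj_eq perm_inj).
rewrite /ee.
have hij' : (val i != val j) by [].
have hp' : (val (p i) != val (p j)) by [].
have h1 : (j < i)%N = ~~ (i < j)%N.
  by rewrite ltnNge leq_eqVlt negb_or hij'.
have h2 : (p j < p i)%N = ~~ (p i < p j)%N.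
  by rewrite ltnNge leq_eqVlt negb_or hp'.
by rewrite h1 h2; case: (i < j)%N; case: (p i < p j)%N.
Qed.

Lemma orient n (x : 'S_n) (F : 'I_n -> rat) (P Q : pred 'I_n) :
  (x * x = 1)%g ->
  (forall i, x i != i -> F (x i) = F i) ->
  (forall i, P i -> x i != i) -> (forall i, Q i -> x i != i) ->
  (forall i, x i != i -> P (x i) = ~~ P i) ->
  (forall i, x i != i -> Q (x i) = ~~ Q i) ->
  \prod_(i | P i) F i = \prod_(i | Q i) F i.
Proof.
move=> hx hF hP hQ hPx hQx.
rewrite (bigID Q) [RHS](bigID P) /=.
congr (_ * _); first by apply: eq_bigl => i; rewrite andbC.
rewrite (reindex_inj (@perm_inj _ x)) /=.
apply: eq_big => j.
  case: (eqVneq (x j) j) => hj.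
    rewrite hj; case Pj: (P j); first by have := hP j Pj; rewrite hj eqxx.
    case Qj: (Q j) => //; by have := hQ j Qj; rewrite hj eqxx.
  by rewrite hPx // hQx // negbK andbC.
move=> /andP [hp _]; apply: hF; have := hP _ hp; rewrite invol_app //.
by rewrite eq_sym.
Qed.

Lemma sg_mul n (g h x : 'S_n) : (x * x = 1)%g ->
  sg (g * h)%g x = sg h x * sg g (h * x * h^-1)%g.
Proof.
move=> hx; rewrite /sg invMg.
under eq_bigr => i _ do rewrite ee_mul.
rewrite big_split /=; congr (_ * _).
have E : forall j, (h * x * h^-1)%g (h^-1%g j) = h^-1%g (x j).
  by move=> j; rewrite !permM permKV.
rewrite [RHS](reindex_inj (@perm_inj _ h^-1%g)) /=.
under [RHS]eq_bigl => j do rewrite E.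
under [RHS]eq_bigr => j _ do rewrite E.
have nx : forall i, x i != i -> (i < x i)%N = ~~ (x i < i)%N.
  move=> i hi; have hi' : (val (x i) != val i) by [].
  by rewrite ltnNge leq_eqVlt negb_or hi'.
have nh : forall i, x i != i ->
   (h^-1%g i < h^-1%g (x i))%N = ~~ (h^-1%g (x i) < h^-1%g i)%N.
  move=> i hi; have hi' : (val (h^-1%g (x i)) != val (h^-1%g i)).
    by rewrite val_eqE (inj_eq perm_inj).
  by rewrite ltnNge leq_eqVlt negb_or hi'.
apply: (@orient _ x) => //.
- move=> i hi; rewrite invol_app // ee_sym //.
  by rewrite (inj_eq perm_inj).
- by move=> i hi; apply/eqP => e; rewrite e ltnn in hi.
- by move=> i hi; apply/eqP => e; rewrite e ltnn in hi.
- move=> i hi; rewrite invol_app // nx //.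
  by rewrite negbK.
- move=> i hi; rewrite invol_app // nh //.
  by rewrite negbK.
Qed.

Lemma sg1 n (x : 'S_n) : sg 1%g x = 1.
Proof. by rewrite /sg invg1; apply: big1 => i _; rewrite /ee !perm1 eqxx. Qed.

Lemma cinv_mul n (g h : 'S_n) u : cinv (g * h)%g u = cinv h (cinv g u).
Proof. by apply: val_inj => /=; rewrite invMg !mulgA. Qed.

Lemma cinv1 n (u : invol n) : cinv 1%g u = u.
Proof. by apply: val_inj => /=; rewrite invg1 mul1g mulg1. Qed.

Lemma phi_mul n (g h : 'S_n) v : phi (g * h)%g v = phi g (phi h v).
Proof.
apply/ffunP => u; rewrite !ffunE.
rewrite (sg_mul _ _ (eqP (valP (cinv (g * h)%g u)))) cinv_mul.
have -> : (h * \val (cinv h (cinv g u)) * h^-1)%g = val (cinv g u).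
  by rewrite /= !mulgA mulgV mul1g mulgK.
exact: (@mulrA rat).
Qed.

Lemma phi1 n (v : Vn n) : phi 1%g v = v.
Proof. by apply/ffunP => u; rewrite ffunE cinv1 sg1 mulr1. Qed.

Lemma phi_lin n (g : 'S_n) (a : rat) (u v : Vn n) :
  phi g (a *: u + v) = a *: phi g u + phi g v.
Proof. by apply/ffunP => w; rewrite !ffunE mulrDl scalerAl. Qed.

Lemma phi_bij n (g : 'S_n) : bijective (phi g).
Proof.
exists (phi g^-1%g) => v; by rewrite -phi_mul ?mulVg ?mulgV phi1.
Qed.

Lemma invg_invol n (s : 'S_n) : (s * s = 1)%g -> (s^-1 = s)%g.
Proof. by move=> hs; rewrite -[s^-1%g]mulg1 -hs mulKg. Qed.

Lemma conj_invol n (s x : 'S_n) : (s * s = 1)%g -> (s * (s * x * s) * s)%g = x.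
Proof. by move=> hs; rewrite !mulgA hs mul1g -mulgA hs mulg1. Qed.

Lemma rho_E n (s : 'S_n) (hs : (s * s = 1)%g) v :
  rho s v = [ffun u => v (cinv s u) * sgn s (val (cinv s u))].
Proof.
have si := invg_invol hs.
apply/ffunP => u; rewrite /rho sum_ffunE !ffunE.
rewrite (bigD1 (cinv s u)) //= big1 ?addr0.
  by rewrite !ffunE si conj_invol // eqxx; exact: mulr1.
move=> w hw; rewrite !ffunE.
case: eqP => e; last exact: mulr0.
case/eqP: hw; apply: val_inj => /=.
by rewrite e si !mulgA hs mul1g -mulgA hs mulg1.
Qed.

Lemma tperm_val n (k l : 'I_n) (hkl : val l = (val k).+1) z :
  val (tperm k l z) = (if val z == val k then (val k).+1
                       else if val z == (val k).+1 then val k else val z).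
Proof.
case: tpermP => [->|->|h1 h2]; rewrite ?eqxx ?hkl //=.
  by case: ifP => [/eqP/esym/n_Sn|] // _; rewrite eqxx.
have h1' : (val z == val k) = false by apply/negbTE/eqP => e; apply: h1; apply: val_inj.
have h2' : (val z == (val k).+1) = false.
  by apply/negbTE/eqP => e; apply: h2; apply: val_inj; rewrite e hkl.
by rewrite h1' h2'.
Qed.

Lemma ee_tperm n (k l : 'I_n) (hkl : val l = (val k).+1) (i j : 'I_n) :
  (i < j)%N -> ee (tperm k l) i j = if (i == k) && (j == l) then -1 else 1.
Proof.
move=> hij; rewrite /ee hij !tperm_val // natcase //.
have -> : (i == k) = (val i == val k) by [].
have -> : (j == l) = (val j == (val k).+1) by rewrite -hkl.
by case: (_ && _).
Qed.

Lemma sg_simple_E n (k l : 'I_n) (hkl : val l = (val k).+1) (x : 'S_n) :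
  sg (tperm k l) x = if x k == l then -1 else 1.
Proof.
rewrite /sg tpermV.
under eq_bigr => i hi do rewrite ee_tperm //.
have kl : (val k < val l)%N by rewrite hkl.
case: ifP => hx.
  rewrite (bigD1 k) /=; last by rewrite (eqP hx).
  rewrite eqxx hx /= big1 ?mulr1 // => i /andP [_ hik].
  by rewrite (negbTE hik).
apply: big1 => i _; case: (eqVneq i k) => [->|] //=.
by rewrite hx.
Qed.

Lemma des_simple n (k l : 'I_n) (hkl : val l = (val k).+1) (x : 'S_n) :
  (x * x = 1)%g ->
  ((tperm k l * x * tperm k l == x)%g && in_des x (tperm k l)) = (x k == l).
Proof.
move=> hx.
have kl : (val k < val l)%N by rewrite hkl.
have kln : k != l by apply/eqP => e; rewrite e ltnn in kl.
apply/idP/idP.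
  case/andP => /eqP hs /existsP [i] /existsP [j] /and3P [/eqP hij /eqP hst hlt].
  have [ik jl] : i = k /\ j = l.
    have := tpermL k l; rewrite hst.
    case: tpermP => [ki|kj|h1 h2] e.
    - subst; split => //; apply: val_inj; by rewrite hij hkl.
    - exfalso; have := hij; rewrite -kj e hkl => h.
      by move: h; move: (val k) => m h; lia.
    - by exfalso; move/eqP: kln; rewrite e.
  subst i j.
  have := congr1 (fun p : 'S_n => p k) hs; rewrite !permM tpermL.
  case: tpermP => [e1|e2|h1 h2] e.
  - by rewrite -e.
  - by exfalso; move: hlt; rewrite e2 -e => h; have := ltn_trans h kl; rewrite ltnn.
  - by exfalso; move/perm_inj: e => e; rewrite e eqxx in kln.
move=> /eqP hk.
have hl : x l = k by rewrite -hk invol_app.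
apply/andP; split.
  apply/eqP/permP => z; rewrite !permM.
  case: (tpermP k l z) => [->|->|h1 h2].
  - by rewrite hl tpermL hk.
  - by rewrite hk tpermR hl.
  rewrite tpermD //.
    by apply/eqP => e; apply: h2; rewrite -(invol_app z hx) -e hk.
  by apply/eqP => e; apply: h1; rewrite -(invol_app z hx) -e hl.
apply/existsP; exists k; apply/existsP; exists l.
by rewrite hkl eqxx /= hk hl eqxx.
Qed.

Lemma phi_simple n (s : 'S_n) v : simple_refl s -> phi s v = rho s v.
Proof.
case/existsP => k /existsP [l /andP [/eqP hkl /eqP ->]].
rewrite rho_E ?tperm2 //; apply/ffunP => u; rewrite !ffunE.
have hu := eqP (valP (cinv (tperm k l) u)).
by rewrite /sgn des_simple // sg_simple_E.
Qed.

Lemma aux_nat (m k : nat) : (m + k.+1)%N = m -> False.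
Proof. by rewrite -[X in _ = X]addn0 => /eqP; rewrite eqn_add2l. Qed.

Lemma gen n (P : 'S_n -> Prop) : P 1%g ->
  (forall g h, P g -> P h -> P (g * h)%g) ->
  (forall s, simple_refl s -> P s) -> forall g, P g.
Proof.
move=> H1 HM HS.
have Ht : forall d (i j : 'I_n), val j = (val i + d.+1)%N -> P (tperm i j).
  elim => [|d IH] i j hij.
    apply: (HS); apply/existsP; exists i; apply/existsP; exists j.
    by rewrite hij addn1 !eqxx.
  have mlt : (val i + d.+1 < n)%N.
    have hj : (val j < n)%N := ltn_ord j; rewrite hij in hj; move: hj; rewrite -?plusE => /ltP hj; apply/ltP; rewrite -?plusE; lia.
  pose m := Ordinal mlt.
  have mi : m != i.
    apply/eqP => e; have := congr1 val e; rewrite /= => h.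
    exact: (aux_nat h).
  have ji : j != i.
    apply/eqP => e; have := congr1 val e; rewrite hij => h.
    exact: (aux_nat h).
  have e : tperm i j = (tperm m j * tperm i m * tperm m j)%g.
    have := tpermJ i m (tperm m j); rewrite /conjg tpermV tpermL tpermD //.
    by rewrite mulgA => ->.
  rewrite e; apply: (HM); first apply: (HM).
  - apply: (HS); apply/existsP; exists m; apply/existsP; exists j.
    by rewrite hij /= addnS !eqxx.
  - exact: IH.
  - apply: (HS); apply/existsP; exists m; apply/existsP; exists j.
    by rewrite hij /= addnS !eqxx.
have Hall : forall a b : 'I_n, P (tperm a b).
  move=> a b; case: (ltngtP (val a) (val b)) => h.
  - apply (Ht (val b - val a - 1)%N a b); move: h; rewrite -?plusE -?minusE => /ltP h.
    lia.
  - rewrite tpermC; apply (Ht (val a - val b - 1)%N b a); move: h; rewrite -?plusE -?minusE => /ltP h.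
    lia.
  - have -> : a = b by apply: val_inj.
    by rewrite tperm1.
move=> g; case: (prod_tpermP g) => ts -> _.
elim: ts => [|t ts IH]; first by rewrite big_nil.
by rewrite big_cons; apply: (HM).
Qed.

Unset Implicit Arguments. Set Strict Implicit. Set Printing Implicit Defensive.

Theorem theorem1p1 (n : nat) (hn : (0 < n)%N) :
  exists phi : 'S_n -> Vn n -> Vn n,
    [/\ is_rep phi,
        (forall s, simple_refl s -> forall v, phi s v = rho s v) &
        (forall psi : 'S_n -> Vn n -> Vn n, is_rep psi ->
           (forall s, simple_refl s -> forall v, psi s v = rho s v) ->
           forall g v, psi g v = phi g v)].
Proof.
exists (@phi n); split.
- split; [exact: phi_lin | exact: phi_bij | exact: phi_mul].
- by move=> s hs v; apply: phi_simple.
move=> psi [_ psib psim] psis.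
apply: (@gen n (fun g => forall v, psi g v = phi g v)).
- move=> v; rewrite phi1.
  have := psim 1%g 1%g v; rewrite mulg1 => e.
  by apply: (bij_inj (psib 1%g)); rewrite -e.
- by move=> g h hg hh v; rewrite psim phi_mul hh hg.
- by move=> s hs v; rewrite psis // phi_simple.
Qed.
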